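(* Let \(X\) be a nonempty set, let \((Q, \preccurlyeq_{Q})\) be a poset, and let \(d \colon X^{2} \to Q\) be a \(\preccurlyeq_{Q}\)-pseudoultrametric. Then there is a unique partial order \(\preccurlyeq_{Q}^{0}\) on \(Q\) such that \(d\) is a \(\preccurlyeq_{Q}^{0}\)-pseudoultrametric and \(\preccurlyeq_{Q}^{0} \subseteq \preccurlyeq\) holds whenever \(\preccurlyeq\) is a partial order on \(Q\) for which \(d\) is a \(\preccurlyeq\)-pseudoultrametric.
   Context: For a partial order \(\preccurlyeq\) on \(Q\), a mapping \(d\colon X^2\to Q\) is a \(\preccurlyeq\)-pseudoultrametric if \((Q,\preccurlyeq)\) has a smallest element \(q_0\), \(d\) is symmetric, \(d(x,x)=q_0\) for all \(x\in X\), and for every triple \(\langle x_1,x_2,x_3\rangle\) of points of \(X\) there is a permutation \((i_1,i_2,i_3)\) of \((1,2,3)\) with \(d(x_{i_1},x_{i_3})\preccurlyeq d(x_{i_1},x_{i_2})\) and \(d(x_{i_1},x_{i_2})=d(x_{i_2},x_{i_3})\). Partial orders are regarded as subsets of \(Q\times Q\). *)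

(* Defs.v *)
Definition rel (Q : Type) := Q -> Q -> Prop.

Definition rel_subset {Q : Type} (R S : rel Q) : Prop :=
  forall a b, R a b -> S a b.

Definition rel_eq {Q : Type} (R S : rel Q) : Prop :=
  forall a b, R a b <-> S a b.

Definition is_partial_order {Q : Type} (le : rel Q) : Prop :=
  (forall a, le a a) /\
  (forall a b, le a b -> le b a -> a = b) /\
  (forall a b c, le a b -> le b c -> le a c).

Definition is_smallest {Q : Type} (le : rel Q) (q0 : Q) : Prop :=
  forall q, le q0 q.

Definition pseudoultrametric {X Q : Type} (le : rel Q) (d : X -> X -> Q) : Prop :=
  exists q0 : Q,
    is_smallest le q0 /\
    (forall x y, d x y = d y x) /\
    (forall x, d x x = q0) /\
    (forall x1 x2 x3 : X,
       exists y1 y2 y3 : X,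
         ((y1 = x1 /\ y2 = x2 /\ y3 = x3) \/
          (y1 = x1 /\ y2 = x3 /\ y3 = x2) \/
          (y1 = x2 /\ y2 = x1 /\ y3 = x3) \/
          (y1 = x2 /\ y2 = x3 /\ y3 = x1) \/
          (y1 = x3 /\ y2 = x1 /\ y3 = x2) \/
          (y1 = x3 /\ y2 = x2 /\ y3 = x1)) /\
         le (d y1 y3) (d y1 y2) /\ d y1 y2 = d y2 y3).

(* Main.v *)
Require Import Defs.

Theorem proposition3p21 (X Q : Type) (leQ : Q -> Q -> Prop) (d : X -> X -> Q)
  (hX : inhabited X) (hleQ : is_partial_order leQ) (hd : pseudoultrametric leQ d) :
  exists le0 : Q -> Q -> Prop,
    (is_partial_order le0 /\ pseudoultrametric le0 d /\
     (forall le : Q -> Q -> Prop,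
        is_partial_order le -> pseudoultrametric le d -> rel_subset le0 le)) /\
    (forall le1 : Q -> Q -> Prop,
       (is_partial_order le1 /\ pseudoultrametric le1 d /\
        (forall le : Q -> Q -> Prop,
           is_partial_order le -> pseudoultrametric le d -> rel_subset le1 le)) ->
       rel_eq le1 le0).
Proof.
  set (le0 := fun a b => forall le : Q -> Q -> Prop,
      is_partial_order le -> pseudoultrametric le d -> le a b).
  assert (H0 : is_partial_order le0 /\ pseudoultrametric le0 d /\
     (forall le : Q -> Q -> Prop,
        is_partial_order le -> pseudoultrametric le d -> rel_subset le0 le)).
  { split; [|split].
    - split; [|split]; unfold le0.
      + intros a le [r _] _; apply r.
      + intros a b h1 h2. pose proof hleQ as [r [an t]].
        apply an; [apply h1 | apply h2]; auto.
      + intros a b c h1 h2 le hp hu. pose proof hp as [r [an t]].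
        apply t with b; [apply h1 | apply h2]; auto.
    - destruct hX as [x].
      destruct hd as [q0 [hs [hsym [hdiag htri]]]].
      exists (d x x). split; [|split; [exact hsym|split]].
      + intros q le hp hu. destruct hu as [q1 [hs1 [_ [hdiag1 _]]]].
        rewrite hdiag1. apply hs1.
      + intros y. rewrite !hdiag. reflexivity.
      + intros x1 x2 x3.
        destruct (htri x1 x2 x3) as [y1 [y2 [y3 [hperm [_ heq]]]]].
        exists y1, y2, y3. split; [exact hperm|split; [|exact heq]].
        intros le hp hu. destruct hp as [r _].
        destruct hu as [q1 [_ [_ [_ htri1]]]].
        assert (key : d y1 y3 = d y1 y2 \/ le (d y1 y3) (d y1 y2)).
        { destruct (htri1 y1 y2 y3) as [z1 [z2 [z3 [hp2 [hl he]]]]].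
          pose proof (hsym y1 y2). pose proof (hsym y1 y3).
          pose proof (hsym y2 y3).
          destruct hp2 as [[-> [-> ->]]|[[-> [-> ->]]|[[-> [-> ->]]|[[-> [-> ->]]|[[-> [-> ->]]|[-> [-> ->]]]]]]];
          first [left; congruence | right; congruence]. }
        destruct key as [e|l]; [rewrite e; apply r | exact l].
    - intros le hp hu a b h. apply h; auto. }
  exists le0. split; [exact H0|].
  intros le1 [hp1 [hu1 hmin1]] a b. split.
  - intros h le hp hu. apply (hmin1 le hp hu). exact h.
  - intros h. apply h; auto.
Qed.
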